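(* Let $\mathcal{C}$ be a class of hypergraphs that is closed under taking projections. If $\mathcal{C}$ has unbounded dual VC dimension, then for any integer $k$ there exists a hypergraph $\mathcal{H}$ in $\mathcal{C}$ with $2^k-1$ vertices and a test cover of size $k$.
   Context: For a hypergraph $\mathcal{H}=(V,\mathcal{E})$ and $X\subseteq V$, the projection of $\mathcal{H}$ on $X$ is the hypergraph $\mathcal{H}_{|X}$ on vertex set $X$ with hyperedges $\{e\cap X: e\in\mathcal{E}\}$. A set $X$ is shattered if $|\mathcal{H}_{|X}|=2^{|X|}$; the VC dimension is the maximum size of a shattered set. The dual hypergraph $\mathcal{H}^*$ has the hyperedges of $\mathcal{H}$ as vertices and, for each vertex $v$ of $\mathcal{H}$, a hyperedge consisting of the hyperedges containing $v$; the dual VC dimension of $\mathcal{H}$ is the VC dimension of $\mathcal{H}^*$. A test cover of $\mathcal{H}$ is a set of hyperedges such that every vertex lies in one of them and every pair of distinct vertices is separated by one of them (one contains exactly one of the two vertices). *)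

(* Defs.v *)
From mathcomp Require Import all_boot all_order.
From mathcomp Require Import finmap.
Set Implicit Arguments. Unset Strict Implicit. Unset Printing Implicit Defensive.
Local Open Scope fset_scope.

Record hypergraph (K : choiceType) := Hypergraph {
  hvert  : {fset K};
  hedges : {fset {fset K}};
  hsub   : forall e, e \in hedges -> e `<=` hvert }.

Section Defs.
Variable K : choiceType.
Implicit Types (H : hypergraph K) (X : {fset K}).

Lemma proj_sub H X : forall e, e \in [fset f `&` X | f in hedges H] -> e `<=` X.
Proof. by move=> e /imfsetP [f _ ->]; exact: fsubsetIr. Qed.

Definition proj H X : hypergraph K :=
  @Hypergraph K X [fset f `&` X | f in hedges H] (@proj_sub H X).

Definition shattered H X : Prop :=
  X `<=` hvert H /\ #|` hedges (proj H X)| = 2 ^ #|` X|.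

Definition shatteredb H X : bool :=
  (X `<=` hvert H) && (#|` hedges (proj H X)| == 2 ^ #|` X|).

Definition vc_dim H : nat :=
  \max_(X <- fpowerset (hvert H) | shatteredb H X) #|` X|.

Definition star H (v : K) : {fset {fset K}} := [fset e in hedges H | v \in e].

Lemma dual_sub H : forall s, s \in [fset star H v | v in hvert H] -> s `<=` hedges H.
Proof.
move=> s /imfsetP [v _ ->]; apply/fsubsetP => e.
by rewrite /star inE => /andP [].
Qed.

Definition dual H : hypergraph {fset K} :=
  @Hypergraph _ (hedges H) [fset star H v | v in hvert H] (@dual_sub H).


Definition test_cover H (T : {fset {fset K}}) : Prop :=
  T `<=` hedges H /\
  (forall v, v \in hvert H -> exists2 e, e \in T & v \in e) /\
  (forall u v, u \in hvert H -> v \in hvert H -> u != v ->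
     exists2 e, e \in T & (u \in e) != (v \in e)).

End Defs.

Definition dual_vc_dim (K : choiceType) (H : hypergraph K) : nat := vc_dim (dual H).

Definition closed_under_projection (C : hypergraph nat -> Prop) : Prop :=
  forall H X, C H -> X `<=` hvert H -> C (proj H X).

Definition unbounded_dual_vc_dim (C : hypergraph nat -> Prop) : Prop :=
  forall d : nat, exists2 H, C H & d <= dual_vc_dim H.

(* Main.v *)
Require Import Defs.
From mathcomp Require Import all_boot all_order.
From mathcomp Require Import finmap.
Local Open Scope fset_scope.

Lemma bigmax_ex {T : eqType} {s : seq T} {P : pred T} {f : T -> nat} {k} :
  (0 < k)%N -> (k <= \max_(x <- s | P x) f x)%N ->
  exists x, [/\ x \in s, P x & (k <= f x)%N].
Proof.
move=> k0; elim: s => [|y s IH]; first by rewrite big_nil leqNgt k0.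
rewrite big_cons; case: ifP => Py.
  rewrite leq_max => /orP [h|/IH [x [xs Px kx]]].
    by exists y; rewrite inE eqxx.
  by exists x; rewrite inE xs orbT.
by move=> /IH [x [xs Px kx]]; exists x; rewrite inE xs orbT.
Qed.

Lemma fsub_card (K : choiceType) k : forall (X : {fset K}), (k <= #|` X|)%N ->
  exists2 Y, Y `<=` X & #|` Y| = k.
Proof.
move=> X; have [n Xn] : exists n, #|` X| = n by eexists.
elim: n X Xn => [|n IH] X Xn; rewrite Xn.
  by rewrite leqn0 => /eqP k0; exists X => //; rewrite Xn k0.
rewrite leq_eqVlt => /orP [/eqP ->|]; first by exists X.
have [x xX] : exists x, x \in X.
  by apply/fset0Pn; apply/negP => /eqP X0; move: Xn; rewrite X0 cardfs0.
move: Xn.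
rewrite (cardfsD1 x) xX add1n => -[Xn] kn.
have [Y YX Yk] := IH _ Xn ltac:(by rewrite Xn); exists Y => //.
apply: fsubset_trans YX _; exact: fsubD1set.
Qed.

Lemma dual_shat (H : hypergraph nat) (S : {fset {fset nat}}) :
  shatteredb (dual H) S -> forall A, A `<=` S ->
  exists2 v, v \in hvert H & star H v `&` S = A.
Proof.
move=> /andP [_ /eqP hc] A AS.
set I := hedges (proj (dual H) S) in hc.
have IP : I `<=` fpowerset S.
  apply/fsubsetP => B /imfsetP [f _ ->]; rewrite fpowersetE; exact: fsubsetIr.
have E : I =i fpowerset S.
  by apply/fsubset_cardP => //; rewrite card_fpowerset hc.
have : A \in I by rewrite E fpowersetE.
move=> /imfsetP [f /imfsetP [v vH ->] ->]; by exists v.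
Qed.

Definition gv (H : hypergraph nat) (S : {fset {fset nat}}) (A : {fset {fset nat}}) : nat :=
  head 0%N [seq v <- (hvert H : seq nat) | star H v `&` S == A].

Lemma gvP H S A : (exists2 v, v \in hvert H & star H v `&` S = A) ->
  gv H S A \in hvert H /\ star H (gv H S A) `&` S = A.
Proof.
case=> v vH vA; rewrite /gv.
have : v \in [seq v <- (hvert H : seq nat) | star H v `&` S == A] by rewrite mem_filter vA eqxx.
case E: [seq _ <- _ | _] => [//|w s] _.
have : w \in [seq v <- (hvert H : seq nat) | star H v `&` S == A] by rewrite E inE eqxx.
by rewrite mem_filter => /andP [/eqP -> ->].
Qed.

Theorem proposition2 (C : hypergraph nat -> Prop) :
  closed_under_projection C -> unbounded_dual_vc_dim C ->
  forall k : nat, exists2 H : hypergraph nat, C H &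
    #|` hvert H| = 2 ^ k - 1 /\
    exists T : {fset {fset nat}}, #|` T| = k /\ test_cover H T.
Proof.
move=> cl unb k.
have [H0 CH0 hd] := unb k.+1.
rewrite /dual_vc_dim /vc_dim in hd.
have [S0 [_ shS0 kS0]] := bigmax_ex (ltn0Sn k) hd.
have [S SS0 Sk] := fsub_card _ _ _ (ltnW kS0).
have S0H : S0 `<=` hedges H0 by case/andP: shS0.
have SH : S `<=` hedges H0 := fsubset_trans SS0 S0H.
have shat : forall A, A `<=` S -> exists2 v, v \in hvert H0 & star H0 v `&` S = A.
  move=> A AS; have [v vH vA] := dual_shat _ _ shS0 _ (fsubset_trans AS SS0).
  exists v => //; apply/fsetP => e; move/fsetP: vA => /(_ e); rewrite !in_fsetI => h.
  case eS: (e \in S).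
    by rewrite (fsubsetP SS0 _ eS) andbT in h *.
  rewrite andbF; apply/esym/negbTE; apply: contraFN eS; exact: (fsubsetP AS e).
set Ps := [fset A in fpowerset S | A != fset0].
have PsS : forall A, A \in Ps -> A `<=` S.
  by move=> A; rewrite !inE fpowersetE => /andP [].
set g := gv H0 S.
have gP : forall A, A \in Ps -> g A \in hvert H0 /\ star H0 (g A) `&` S = A.
  by move=> A /PsS /shat /gvP.
have gmem : forall A e, A \in Ps -> e \in S -> (g A \in e) = (e \in A).
  move=> A e AP eS; have [_ /fsetP /(_ e)] := gP A AP.
  by rewrite in_fsetI eS andbT /star !inE /= (fsubsetP SH _ eS) /= => ->.
set X := [fset g A | A in Ps].
have XH : X `<=` hvert H0.
  by apply/fsubsetP => v /imfsetP [A AP ->]; case: (gP A AP).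
have ginj : {in Ps &, injective g}.
  move=> A B AP BP gAB; case: (gP A AP) => _ <-; case: (gP B BP) => _ <-.
  by rewrite gAB.
exists (proj H0 X); first exact: cl.
split.
  rewrite /= (eqP (introT (card_in_imfsetP _ _) ginj)).
  have -> : Ps = fpowerset S `\ fset0.
    by apply/fsetP => A; rewrite !inE andbC.
  have := cardfsD1 fset0 (fpowerset S).
  by rewrite card_fpowerset Sk fpowersetE fsub0set add1n => ->; rewrite subn1.
exists [fset e `&` X | e in S]; split.
  rewrite (eqP (introT (card_in_imfsetP _ _) _)) //.
  move=> e e' eS e'S eX.
  have AP : [fset e] \in Ps by rewrite !inE fpowersetE fsub1set eS /=; apply/fset0Pn; exists e; rewrite inE.
  have : g [fset e] \in e `&` X by rewrite in_fsetI gmem // inE eqxx in_imfset.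
  rewrite eX in_fsetI gmem // inE => /andP [/eqP -> _] //.
split; last split.
- apply/fsubsetP => f /imfsetP [e eS ->]; apply/imfsetP; exists e => //.
  exact: (fsubsetP SH).
- move=> v /imfsetP [A AP ->].
  have : A != fset0 by move: AP; rewrite !inE => /andP [].
  case/fset0Pn => e eA.
  have eS : e \in S := fsubsetP (PsS A AP) e eA.
  exists (e `&` X); first exact: in_imfset.
  by rewrite in_fsetI gmem // eA in_imfset.
- move=> u v /imfsetP [A AP ->] /imfsetP [B BP ->] gAB.
  have AB : A != B by apply: contraNN gAB => /eqP ->.
  have : has (fun e => (e \in A) != (e \in B)) S.
    apply/negPn/negP => /hasPn h; move/negP: AB; apply; apply/eqP/fsetP => e.
    case eS: (e \in S); first by move/negbNE: (h e eS) => /eqP.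
    have [eA eB] : (e \in A) = false /\ (e \in B) = false.
      by split; apply: contraFF eS; [exact: (fsubsetP (PsS A AP)) | exact: (fsubsetP (PsS B BP))].
    by rewrite eA eB.
  case/hasP => e eS hdiff.
  exists (e `&` X); first exact: in_imfset.
  have gAX : g A \in X by exact: in_imfset.
  have gBX : g B \in X by exact: in_imfset.
  by rewrite !in_fsetI gAX gBX !andbT !gmem.
Qed.
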